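(* (Deutsch–Wallace) Let $V$ be a real-valued function on the set of all games (as defined in the context) satisfying Constancy, Dominance, Additivity, Continuity, Indifference and 2-Fine-graining. Then for every game $G=(\boldsymbol{\alpha},\mathbf{r})$ with $n$ outcomes and $\boldsymbol{\alpha}\neq\mathbf{0}$, \[ V(G)=\frac{1}{\|\boldsymbol{\alpha}\|_2^2}\sum_{i=1}^n|\alpha_i|^2 r_i. \]
   Context: A game with $n$ outcomes ($n\ge1$) is a pair $G=(\boldsymbol{\alpha},\mathbf{r})$ with $\boldsymbol{\alpha}\in\mathbb{C}^n$ and $\mathbf{r}\in\mathbb{R}^n$, written as an $n\times2$ array with rows $(\alpha_i,r_i)$. $V$ assigns a real number to each game. Axioms: Constancy: if $r_i=r_1$ for all $i$, then $V(\boldsymbol{\alpha},\mathbf{r})=r_1$. Dominance: if $\mathbf{r}\ge\mathbf{r}'$ componentwise, then $V(\boldsymbol{\alpha},\mathbf{r})\ge V(\boldsymbol{\alpha},\mathbf{r}')$. Additivity: $V(\boldsymbol{\alpha},\mathbf{r}+\mathbf{r}')=V(\boldsymbol{\alpha},\mathbf{r})+V(\boldsymbol{\alpha},\mathbf{r}')$. Continuity: if games $G_k$ with $n$ outcomes converge to $G$ in the metric induced by $\|(\boldsymbol{\alpha},\mathbf{r})\|:=\|\boldsymbol{\alpha}\|_3+\|\mathbf{r}\|_1$, then $V(G)=\lim_k V(G_k)$. Indifference: for every permutation $\sigma$ of $\{1,\dots,n\}$, $V(\sigma(\boldsymbol{\alpha}),\sigma(\mathbf{r}))=V(\boldsymbol{\alpha},\mathbf{r})$,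 where $(\sigma(\mathbf{v}))_i=v_{\sigma(i)}$. 2-Fine-graining: for any game $G$ with rows $(\alpha_1,r_1),\dots,(\alpha_n,r_n)$ and any complex $\alpha_{11},\alpha_{12}$ with $\sqrt{|\alpha_{11}|^2+|\alpha_{12}|^2}=|\alpha_1|$, the game $G'$ with $n+1$ rows $(\alpha_{11},r_1),(\alpha_{12},r_1),(\alpha_2,r_2),\dots,(\alpha_n,r_n)$ satisfies $V(G')=V(G)$. *)

(* Defs.v *)
From Stdlib Require Import Reals List Permutation.
From Coquelicot Require Import Coquelicot.
Open Scope R_scope.

Definition game := list (C * R).

Definition alphas (G : game) : list C := map fst G.
Definition rewards (G : game) : list R := map snd G.

Definition mkgame (a : list C) (r : list R) : game := combine a r.

Definition vadd (r r' : list R) : list R :=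
  map (fun p => fst p + snd p) (combine r r').

Definition sumR (l : list R) : R := fold_right Rplus 0 l.

Definition norm3 (a : list C) : R :=
  let s := sumR (map (fun z => (Cmod z) ^ 3) a) in
  if Req_EM_T s 0 then 0 else Rpower s (1/3).

Definition norm1 (r : list R) : R := sumR (map Rabs r).

Definition game_dist (G H : game) : R :=
  norm3 (map (fun p => Cminus (fst p) (snd p)) (combine (alphas G) (alphas H)))
  + norm1 (map (fun p => fst p - snd p) (combine (rewards G) (rewards H))).

Definition norm2sq (a : list C) : R := sumR (map (fun z => (Cmod z) ^ 2) a).

Definition weighted (G : game) : R :=
  sumR (map (fun p => (Cmod (fst p)) ^ 2 * snd p) G).

(* The six axioms. Games have n >= 1 outcomes, i.e. are nonempty lists. *)
Definition Constancy (V : game -> R) : Prop :=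
  forall (G : game) (r1 : R), G <> nil ->
    (forall p, In p G -> snd p = r1) -> V G = r1.

Definition Dominance (V : game -> R) : Prop :=
  forall (a : list C) (r r' : list R), a <> nil ->
    length r = length a -> length r' = length a ->
    Forall2 (fun x y => x >= y) r r' ->
    V (mkgame a r) >= V (mkgame a r').

Definition Additivity (V : game -> R) : Prop :=
  forall (a : list C) (r r' : list R), a <> nil ->
    length r = length a -> length r' = length a ->
    V (mkgame a (vadd r r')) = V (mkgame a r) + V (mkgame a r').

Definition Continuity (V : game -> R) : Prop :=
  forall (Gk : nat -> game) (G : game), G <> nil ->
    (forall k, length (Gk k) = length G) ->
    is_lim_seq (fun k => game_dist (Gk k) G) 0 ->
    is_lim_seq (fun k => V (Gk k)) (V G).

Definition Indifference (V : game -> R) : Prop :=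
  forall (G G' : game), G <> nil -> Permutation G G' -> V G' = V G.

Definition FineGraining2 (V : game -> R) : Prop :=
  forall (a1 a11 a12 : C) (r1 : R) (rest : game),
    sqrt ((Cmod a11) ^ 2 + (Cmod a12) ^ 2) = Cmod a1 ->
    V ((a11, r1) :: (a12, r1) :: rest) = V ((a1, r1) :: rest).

(* Main.v *)
Require Import Defs.
From Stdlib Require Import Reals List Permutation Lra Lia.
From Coquelicot Require Import Coquelicot.
Open Scope R_scope.

Fixpoint gadd (G1 G2 : game) : game :=
  match G1, G2 with
  | (a, x) :: t1, (_, y) :: t2 => (a, x + y) :: gadd t1 t2
  | _, _ => nil
  end.

Lemma mkgame_id (G : game) : mkgame (alphas G) (rewards G) = G.
Proof. induction G as [|[a r] G IH]; simpl; auto. unfold mkgame in *; simpl; now rewrite IH. Qed.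

Lemma mkgame_vadd (G1 G2 : game) :
  mkgame (alphas G1) (vadd (rewards G1) (rewards G2)) = gadd G1 G2.
Proof.
  revert G2; induction G1 as [|[a r] G1 IH]; intros [|[b s] G2]; simpl; auto.
  unfold mkgame, vadd in *; simpl. now rewrite IH.
Qed.

Lemma add_games (V : game -> R) : Additivity V ->
  forall G1 G2, alphas G1 = alphas G2 -> G1 <> nil ->
  V (gadd G1 G2) = V G1 + V G2.
Proof.
  intros HA G1 G2 Ha Hn.
  rewrite <- mkgame_vadd.
  rewrite HA.
  - rewrite mkgame_id, Ha, mkgame_id. reflexivity.
  - destruct G1; [congruence| discriminate].
  - unfold rewards, alphas; now rewrite !length_map.
  - unfold rewards, alphas in *. rewrite Ha, !length_map. reflexivity.
Qed.

Lemma gadd_app l1 l1' l2 l2' : length l1 = length l1' ->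
  gadd (l1 ++ l2) (l1' ++ l2') = gadd l1 l1' ++ gadd l2 l2'.
Proof.
  revert l1'; induction l1 as [|[a x] l1 IH]; intros [|[b y] l1'] H; simpl in *; try discriminate; auto.
  rewrite IH; auto.
Qed.

Lemma gadd_repeat c x y n : gadd (repeat (c,x) n) (repeat (c,y) n) = repeat (c, x+y) n.
Proof. induction n; simpl; auto. now rewrite IHn. Qed.

Definition z0 (P : list C) : game := map (fun a => (a, 0)) P.

Lemma gadd_z0_l P Q : alphas Q = P -> gadd (z0 P) Q = Q.
Proof.
  revert P; induction Q as [|[a r] Q IH]; intros [|b P] H; simpl in *; try discriminate; auto.
  injection H; intros; subst. rewrite IH; auto. now rewrite Rplus_0_l.
Qed.

Lemma gadd_z0_r P Q : alphas Q = P -> gadd Q (z0 P) = Q.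
Proof.
  revert P; induction Q as [|[a r] Q IH]; intros [|b P] H; simpl in *; try discriminate; auto.
  injection H; intros; subst. rewrite IH; auto. now rewrite Rplus_0_r.
Qed.

Lemma alphas_z0 P : alphas (z0 P) = P.
Proof. induction P; simpl; auto. unfold alphas in *; simpl; now rewrite IHP. Qed.

Lemma length_z0 P : length (z0 P) = length P.
Proof. unfold z0; now rewrite length_map. Qed.

Lemma sumR_app l1 l2 : sumR (l1 ++ l2) = sumR l1 + sumR l2.
Proof. induction l1; simpl; [lra|]. rewrite IHl1; lra. Qed.

Lemma sumR_repeat x n : sumR (repeat x n) = INR n * x.
Proof. induction n; simpl sumR. simpl; lra. rewrite IHn, S_INR; lra. Qed.

Lemma sumR_nonneg l : List.Forall (fun x => 0 <= x) l -> 0 <= sumR l.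
Proof. induction 1 as [|a l Ha Hl IH]; unfold sumR in *; simpl; lra. Qed.

Lemma sumR_In x l : List.Forall (fun x => 0 <= x) l -> In x l -> x <= sumR l.
Proof.
  induction 1 as [|a l Ha Hl IH]; simpl; [tauto|]. intros [->|Hi].
  - pose proof (sumR_nonneg _ Hl); unfold sumR in *; simpl; lra.
  - specialize (IH Hi); unfold sumR in *; simpl; lra.
Qed.

Lemma squeeze_abstract (g t lam : R) : 0 <= lam -> 0 <= t <= 1 -> 0 <= g <= lam ->
 (forall k j : nat, INR (S k) <= t * INR (S k + S j) -> INR (S k) * lam <= g * INR (S k + S j)) ->
 (forall k j : nat, t * INR (S k + S j) <= INR (S k) -> g * INR (S k + S j) <= INR (S k) * lam) ->
 g = lam * t.
Proof.
  intros Hl Ht Hg Hlo Hup.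
  assert (B : forall n : nat, Rabs (g - lam * t) * INR (S (S n)) <= lam).
  { intro n. set (N := INR (S (S n))).
    assert (HN : N = INR n + 2) by (unfold N; rewrite !S_INR; ring).
    assert (Hn0 : 0 <= INR n) by apply pos_INR.
    assert (Nt : 0 <= N * t) by nra.
    destruct (nfloor_ex (N * t) Nt) as [m [Hm1 Hm2]].
    assert (Hm0 : 0 <= INR m) by apply pos_INR.
    assert (Lo : lam * t * N - lam <= g * N).
    { destruct m as [|m'].
      - simpl in Hm2. nra.
      - destruct (Compare_dec.le_lt_dec m' n) as [Hle|Hlt].
        + specialize (Hlo m' (n - m')%nat).
          replace (S m' + S (n - m'))%nat with (S (S n)) in Hlo by lia.
          fold N in Hlo. rewrite S_INR in *. nra.
        + specialize (Hlo n 0%nat).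
          replace (S n + 1)%nat with (S (S n)) in Hlo by lia.
          fold N in Hlo. rewrite S_INR in Hlo, Hm1.
          assert (INR n + 1 <= INR m') by (rewrite <- S_INR; apply le_INR; lia).
          assert (P : INR n + 1 <= t * N) by lra.
          specialize (Hlo P). assert (lam * t <= lam) by nra. nra. }
    assert (Up : g * N <= lam * t * N + lam).
    { destruct (Compare_dec.le_lt_dec m n) as [Hle|Hlt].
      + specialize (Hup m (n - m)%nat).
        replace (S m + S (n - m))%nat with (S (S n)) in Hup by lia.
        fold N in Hup. rewrite S_INR in *. nra.
      + assert (INR n + 1 <= INR m) by (rewrite <- S_INR; apply le_INR; lia).
        nra. }
    unfold Rabs; destruct (Rcase_abs (g - lam * t)); nra. }
  destruct (Req_dec (g - lam * t) 0) as [E|E]; [lra|].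
  exfalso. assert (Hd : 0 < Rabs (g - lam * t)) by (apply Rabs_pos_lt; auto).
  assert (H0 : 0 <= lam / Rabs (g - lam * t)) by (apply Rdiv_le_0_compat; lra).
  destruct (nfloor_ex _ H0) as [m [_ Hm]].
  specialize (B m). rewrite !S_INR in B.
  assert (lam < Rabs (g - lam * t) * (INR m + 1)).
  { apply (Rmult_lt_compat_r (Rabs (g - lam * t))) in Hm; auto.
    unfold Rdiv in Hm. rewrite Rmult_assoc, Rinv_l in Hm; lra. }
  assert (0 <= INR m) by apply pos_INR. nra.
Qed.

Lemma CmodR_pos x : 0 <= x -> Cmod (RtoC x) = x.
Proof. intro; rewrite Cmod_R; now apply Rabs_pos_eq. Qed.

Lemma phase (V : game -> R) : FineGraining2 V ->
  forall c r rest, V ((c, r) :: rest) = V ((RtoC (Cmod c), r) :: rest).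
Proof.
  intros HF c r rest.
  assert (E : sqrt (Cmod c ^ 2 + Cmod 0 ^ 2) = Cmod c).
  { rewrite Cmod_0, pow_i, Rplus_0_r by lia. apply sqrt_pow2, Cmod_ge_0. }
  rewrite <- (HF c c 0%C r rest E).
  apply HF. rewrite E, CmodR_pos; auto. apply Cmod_ge_0.
Qed.

Definition sq2 (L : game) : R := sumR (map (fun p => Cmod (fst p) ^ 2) L).

Lemma merge (V : game -> R) : FineGraining2 V ->
  forall L d r rest, (forall p, In p L -> snd p = r) ->
  V ((d, r) :: L ++ rest) = V ((RtoC (sqrt (Cmod d ^ 2 + sq2 L)), r) :: rest).
Proof.
  intros HF L; induction L as [|[c r'] L IH]; intros d r rest HL.
  - replace (sqrt (Cmod d ^ 2 + sq2 nil)) with (Cmod d).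
    + apply phase; auto.
    + unfold sq2, sumR; cbn [map fold_right]. rewrite Rplus_0_r, sqrt_pow2; auto. apply Cmod_ge_0.
  - assert (r' = r) by (apply (HL (c, r')); simpl; auto). subst r'.
    simpl app.
    set (s := sqrt (Cmod d ^ 2 + Cmod c ^ 2)).
    assert (Hs : 0 <= s) by apply sqrt_pos.
    rewrite (HF (RtoC s) d c r (L ++ rest)).
    2:{ rewrite CmodR_pos; auto. }
    rewrite IH.
    2:{ intros p Hp; apply HL; simpl; auto. }
    do 3 f_equal. rewrite CmodR_pos; auto. unfold s; rewrite pow2_sqrt.
    + unfold sq2, sumR; cbn [map fold_right fst]. now rewrite Rplus_assoc.
    + pose proof (pow2_ge_0 (Cmod d)); pose proof (pow2_ge_0 (Cmod c)); lra.
Qed.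

Lemma sq2_repeat c r n : sq2 (repeat (c, r) n) = INR n * Cmod c ^ 2.
Proof. unfold sq2. rewrite map_repeat, sumR_repeat. reflexivity. Qed.

Lemma zero_game (V : game -> R) : Constancy V -> forall G, G <> nil ->
  (forall p, In p G -> snd p = 0) -> V G = 0.
Proof. intros HC G Hn Hp; now apply HC. Qed.

Lemma eq_amp (V : game -> R) : Constancy V -> Additivity V -> Indifference V ->
  forall c lam M k j, (j + k = S M)%nat ->
  V (repeat (c, 0) j ++ repeat (c, lam) k) = INR k * V ((c, lam) :: repeat (c, 0) M).
Proof.
  intros HC HA HI c lam M k; induction k as [|k IH]; intros j Hjk.
  - rewrite app_nil_r. simpl. rewrite Rmult_0_l. apply HC.
    + destruct j; [lia| discriminate].
    + intros p Hp; apply repeat_spec in Hp; now subst.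
  - assert (E : repeat (c, 0) j ++ repeat (c, lam) (S k) =
      gadd (repeat (c, 0) j ++ (c, lam) :: repeat (c, 0) k)
           (repeat (c, 0) (S j) ++ repeat (c, lam) k)).
    { replace (repeat (c, 0) (S j)) with (repeat (c, 0) j ++ (c, 0) :: nil).
      2:{ replace (S j) with (j + 1)%nat by lia. now rewrite repeat_app. }
      rewrite <- app_assoc. rewrite gadd_app by reflexivity.
      rewrite gadd_repeat, Rplus_0_r. simpl app. simpl gadd.
      rewrite Rplus_0_r, gadd_repeat, Rplus_0_l. reflexivity. }

    rewrite E, add_games; auto.
    + rewrite (IH (S j)) by lia.
      rewrite (HI ((c, lam) :: repeat (c, 0) M)).
      * rewrite S_INR; ring.
      * discriminate.
      * replace M with (j + k)%nat by lia. rewrite repeat_app.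
        apply Permutation_middle.
    + unfold alphas. rewrite !map_app, !map_repeat. simpl.
      rewrite !map_repeat. simpl.
      clear. induction j; simpl; auto. now rewrite IHj.
    + destruct j; discriminate.
Qed.

Definition g2 (V : game -> R) (lam x y : R) : R :=
  V ((RtoC x, lam) :: (RtoC y, 0) :: nil).

Lemma known (V : game -> R) : Constancy V -> Additivity V -> Indifference V -> FineGraining2 V ->
  forall c lam k j,
  g2 V lam (sqrt (INR (S k) * Cmod c ^ 2)) (sqrt (INR (S j) * Cmod c ^ 2))
  = INR (S k) * lam / INR (S k + S j).
Proof.
  intros HC HA HI HF c lam k j.
  pose proof (eq_amp V HC HA HI c lam (k + S j) (S k) (S j) ltac:(lia)) as EA.
  pose proof (eq_amp V HC HA HI c lam (k + S j) (S (k + S j)) 0 ltac:(lia)) as Ew.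
  rewrite app_nil_l in Ew.
  rewrite (HC (repeat (c, lam) (S (k + S j))) lam) in Ew.
  2:{ discriminate. }
  2:{ intros p Hp; apply repeat_spec in Hp; rewrite Hp; reflexivity. }
  set (w := V ((c, lam) :: repeat (c, 0) (k + S j))) in *.
  assert (Hw : w = lam / INR (S k + S j)).
  { replace (S k + S j)%nat with (S (k + S j)) by lia.
    rewrite Ew. field. apply not_0_INR; lia. }
  cbn [repeat app] in EA.
  rewrite (merge V HF) in EA.
  2:{ intros p Hp; apply repeat_spec in Hp; rewrite Hp; reflexivity. }
  set (s0 := RtoC (sqrt (Cmod c ^ 2 + sq2 (repeat (c, 0) j)))) in *.
  rewrite (HI ((c, lam) :: repeat (c, lam) k ++ (s0, 0) :: nil)
              ((s0, 0) :: (c, lam) :: repeat (c, lam) k)) in EA.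
  2:{ discriminate. }
  2:{ apply Permutation_sym. apply (Permutation_cons_append ((c, lam) :: repeat (c, lam) k)). }
  rewrite (merge V HF) in EA.
  2:{ intros p Hp; apply repeat_spec in Hp; rewrite Hp; reflexivity. }
  rewrite !sq2_repeat in EA.
  unfold g2, s0 in *. rewrite sq2_repeat in EA.
  replace (INR (S k) * Cmod c ^ 2) with (Cmod c ^ 2 + INR k * Cmod c ^ 2) by (rewrite S_INR; ring).
  replace (INR (S j) * Cmod c ^ 2) with (Cmod c ^ 2 + INR j * Cmod c ^ 2) by (rewrite S_INR; ring).
  rewrite EA, Hw. rewrite S_INR. field. apply not_0_INR; lia.
Qed.

Lemma bounds (V : game -> R) : Constancy V -> Dominance V ->
  forall lam x y, 0 <= lam -> 0 <= g2 V lam x y <= lam.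
Proof.
  intros HC HD lam x y Hl.
  pose proof (HD (RtoC x :: RtoC y :: nil) (lam :: 0 :: nil) (0 :: 0 :: nil)) as D1.
  pose proof (HD (RtoC x :: RtoC y :: nil) (lam :: lam :: nil) (lam :: 0 :: nil)) as D2.
  unfold mkgame in D1, D2; cbn [combine] in D1, D2.
  rewrite (HC ((RtoC x, 0) :: (RtoC y, 0) :: nil) 0) in D1; [| discriminate | simpl; intros p [<-|[<-|[]]]; reflexivity].
  rewrite (HC ((RtoC x, lam) :: (RtoC y, lam) :: nil) lam) in D2; [| discriminate | simpl; intros p [<-|[<-|[]]]; reflexivity].
  unfold g2.
  split; [apply Rge_le, D1 | apply Rge_le, D2]; try discriminate; try reflexivity;
    repeat (apply Forall2_cons; [lra|]); apply Forall2_nil.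
Qed.

Lemma monotone (V : game -> R) : Dominance V -> Indifference V -> FineGraining2 V ->
  forall lam x y x' y', 0 <= lam -> 0 <= x -> 0 <= y -> 0 <= x' -> 0 <= y' ->
  x <= x' -> x ^ 2 + y ^ 2 = x' ^ 2 + y' ^ 2 ->
  g2 V lam x y <= g2 V lam x' y'.
Proof.
  intros HD HI HF lam x y x' y' Hl Hx Hy Hx' Hy' Hxx E.
  set (c := sqrt (x' ^ 2 - x ^ 2)).
  assert (Hc2 : c ^ 2 = x' ^ 2 - x ^ 2) by (apply pow2_sqrt; nra).
  assert (Hc : 0 <= c) by apply sqrt_pos.
  pose proof (HD (RtoC x :: RtoC c :: RtoC y' :: nil) (lam :: lam :: 0 :: nil) (lam :: 0 :: 0 :: nil)) as D.
  unfold mkgame in D; cbn [combine] in D.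
  assert (D' : V ((RtoC x, lam) :: (RtoC c, lam) :: (RtoC y', 0) :: nil) >=
               V ((RtoC x, lam) :: (RtoC c, 0) :: (RtoC y', 0) :: nil)).
  { apply D; try discriminate; try reflexivity. repeat (apply Forall2_cons; [lra|]); apply Forall2_nil. }
  clear D.
  change ((RtoC x, lam) :: (RtoC c, lam) :: (RtoC y', 0) :: nil) with
    ((RtoC x, lam) :: ((RtoC c, lam) :: nil) ++ (RtoC y', 0) :: nil) in D'.
  rewrite (merge V HF) in D'.
  2:{ simpl; intros p [<-|[]]; reflexivity. }
  rewrite (HI ((RtoC c, 0) :: ((RtoC y', 0) :: nil) ++ (RtoC x, lam) :: nil)
     ((RtoC x, lam) :: (RtoC c, 0) :: (RtoC y', 0) :: nil)) in D'.
  2:{ discriminate. }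
  2:{ simpl. apply Permutation_sym, (Permutation_cons_append ((RtoC c, 0) :: (RtoC y', 0) :: nil)). }
  rewrite (merge V HF) in D'.
  2:{ simpl; intros p [<-|[]]; reflexivity. }
  rewrite (HI ((RtoC x, lam) :: (RtoC (sqrt (Cmod c ^ 2 + sq2 ((RtoC y', 0) :: nil))), 0) :: nil)
    ((RtoC (sqrt (Cmod c ^ 2 + sq2 ((RtoC y', 0) :: nil))), 0) :: (RtoC x, lam) :: nil)) in D'.
  2:{ discriminate. }
  2:{ apply perm_swap. }
  unfold g2.
  replace y with (sqrt (Cmod c ^ 2 + sq2 ((RtoC y', 0) :: nil))).
  replace x' with (sqrt (Cmod x ^ 2 + sq2 ((RtoC c, lam) :: nil))).
  - apply Rge_le, D'.
  - unfold sq2, sumR; cbn [map fold_right fst]. rewrite !CmodR_pos by auto.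
    rewrite Rplus_0_r, Hc2. replace (x ^ 2 + (x' ^ 2 - x ^ 2)) with (x' ^ 2) by ring.
    now apply sqrt_pow2.
  - unfold sq2, sumR; cbn [map fold_right fst]. rewrite !CmodR_pos by auto.
    rewrite Rplus_0_r, Hc2. replace (x' ^ 2 - x ^ 2 + y' ^ 2) with (y ^ 2) by lra.
    now apply sqrt_pow2.
Qed.

Lemma two_pos (V : game -> R) : Constancy V -> Dominance V -> Additivity V ->
  Indifference V -> FineGraining2 V ->
  forall lam x y, 0 <= lam -> 0 <= x -> 0 <= y -> 0 < x ^ 2 + y ^ 2 ->
  g2 V lam x y = lam * (x ^ 2 / (x ^ 2 + y ^ 2)).
Proof.
  intros HC HD HA HI HF lam x y Hl Hx Hy HT.
  set (T := x ^ 2 + y ^ 2) in *.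
  set (t := x ^ 2 / T).
  assert (Htx : t * T = x ^ 2) by (unfold t; field; lra).
  assert (Hx2 : 0 <= x ^ 2) by nra. assert (Hy2 : 0 <= y ^ 2) by nra.
  assert (Ht : 0 <= t <= 1).
  { split; unfold t.
    - apply Rdiv_le_0_compat; lra.
    - apply Rmult_le_reg_r with T; auto. fold t. rewrite Htx. unfold T; lra. }
  assert (KP : forall k j : nat, exists xk yk,
     0 <= xk /\ 0 <= yk /\ xk ^ 2 + yk ^ 2 = T /\
     xk ^ 2 * INR (S k + S j) = INR (S k) * T /\
     g2 V lam xk yk = INR (S k) * lam / INR (S k + S j)).
  { intros k j.
    set (N := INR (S k + S j)).
    assert (HN : 0 < N) by (apply lt_0_INR; lia).
    assert (HNe : N = INR (S k) + INR (S j)) by (unfold N; apply plus_INR).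
    assert (Hu : 0 <= T / N) by (apply Rdiv_le_0_compat; lra).
    set (c := RtoC (sqrt (T / N))).
    assert (Hc : Cmod c ^ 2 = T / N) by (unfold c; rewrite CmodR_pos by apply sqrt_pos; now apply pow2_sqrt).
    pose proof (known V HC HA HI HF c lam k j) as K.
    rewrite Hc in K.
    assert (Ha : 0 <= INR (S k)) by apply pos_INR.
    assert (Hb : 0 <= INR (S j)) by apply pos_INR.
    exists (sqrt (INR (S k) * (T / N))), (sqrt (INR (S j) * (T / N))).
    repeat split; try apply sqrt_pos; auto.
    - rewrite !pow2_sqrt by nra. rewrite <- Rmult_plus_distr_r, <- HNe. field; lra.
    - rewrite pow2_sqrt by nra. field; lra. }
  apply squeeze_abstract.
  - lra.
  - lra.
  - apply bounds; auto.
  - intros k j Hk. destruct (KP k j) as [xk [yk [Hxk [Hyk [Es [Ek Eg]]]]]].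
    assert (HN : 0 < INR (S k + S j)) by (apply lt_0_INR; lia).
    assert (Le : g2 V lam xk yk <= g2 V lam x y).
    { apply monotone; auto; try (unfold T in Es; lra).
      rewrite <- (sqrt_pow2 x Hx), <- (sqrt_pow2 xk Hxk). apply sqrt_le_1_alt.
        apply Rmult_le_reg_r with (INR (S k + S j)); auto. rewrite Ek, <- Htx. nra. }
    rewrite Eg in Le.
    apply Rmult_le_compat_r with (r := INR (S k + S j)) in Le; [|lra].
    unfold Rdiv in Le. rewrite Rmult_assoc, Rinv_l in Le; lra.
  - intros k j Hk. destruct (KP k j) as [xk [yk [Hxk [Hyk [Es [Ek Eg]]]]]].
    assert (HN : 0 < INR (S k + S j)) by (apply lt_0_INR; lia).
    assert (Le : g2 V lam x y <= g2 V lam xk yk).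
    { apply monotone; auto; try (unfold T in Es; lra).
      rewrite <- (sqrt_pow2 x Hx), <- (sqrt_pow2 xk Hxk). apply sqrt_le_1_alt.
        apply Rmult_le_reg_r with (INR (S k + S j)); auto. rewrite Ek, <- Htx. nra. }
    rewrite Eg in Le.
    apply Rmult_le_compat_r with (r := INR (S k + S j)) in Le; [|lra].
    unfold Rdiv in Le. rewrite Rmult_assoc, Rinv_l in Le; lra.
Qed.

Lemma two_all (V : game -> R) : Constancy V -> Dominance V -> Additivity V ->
  Indifference V -> FineGraining2 V ->
  forall lam x y, 0 <= x -> 0 <= y -> 0 < x ^ 2 + y ^ 2 ->
  g2 V lam x y = lam * (x ^ 2 / (x ^ 2 + y ^ 2)).
Proof.
  intros HC HD HA HI HF lam x y Hx Hy HT.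
  destruct (Rle_dec 0 lam) as [Hl|Hl]; [apply two_pos; auto|].
  pose proof (two_pos V HC HD HA HI HF (- lam) x y ltac:(lra) Hx Hy HT) as E.
  pose proof (add_games V HA ((RtoC x, lam) :: (RtoC y, 0) :: nil)
     ((RtoC x, - lam) :: (RtoC y, 0) :: nil) eq_refl ltac:(discriminate)) as A.
  cbn [gadd] in A.
  rewrite (HC ((RtoC x, lam + - lam) :: (RtoC y, 0 + 0) :: nil) 0) in A.
  - unfold g2 in *. rewrite E in A. lra.
  - discriminate.
  - simpl; intros p [<-|[<-|[]]]; simpl; lra.
Qed.

Lemma norm2sq_mid P c Q : norm2sq (P ++ c :: Q) = Cmod c ^ 2 + norm2sq (P ++ Q).
Proof. unfold norm2sq. rewrite !map_app, !sumR_app. cbn [map].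
  change (sumR (?a :: ?l)) with (a + sumR l). lra. Qed.

Lemma norm2sq_nonneg l : 0 <= norm2sq l.
Proof. induction l; unfold norm2sq, sumR in *; cbn [map fold_right] in *; [lra|].
  pose proof (pow2_ge_0 (Cmod a)); lra. Qed.

Lemma sq2_z0 L : sq2 (z0 L) = norm2sq L.
Proof. unfold sq2, z0, norm2sq. now rewrite map_map. Qed.

Lemma single (V : game -> R) : Constancy V -> Dominance V -> Additivity V ->
  Indifference V -> FineGraining2 V ->
  forall P Q c lam, 0 < norm2sq (P ++ c :: Q) ->
  V (z0 P ++ (c, lam) :: z0 Q) = lam * Cmod c ^ 2 / norm2sq (P ++ c :: Q).
Proof.
  intros HC HD HA HI HF P Q c lam Hpos.
  rewrite norm2sq_mid in *.
  rewrite (HI ((c, lam) :: z0 P ++ z0 Q) (z0 P ++ (c, lam) :: z0 Q)).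
  2:{ discriminate. }
  2:{ apply Permutation_middle. }
  assert (Ez : z0 P ++ z0 Q = z0 (P ++ Q)) by (unfold z0; now rewrite map_app).
  rewrite Ez.
  destruct (P ++ Q) as [|d L] eqn:EPQ.
  - rewrite (HC _ lam).
    + unfold norm2sq, sumR in *; cbn [map fold_right] in *. rewrite Rplus_0_r in *. unfold Rdiv. rewrite Rmult_assoc, Rinv_r; lra.
    + discriminate.
    + simpl. intros p [<-|[]]; reflexivity.
  - change (z0 (d :: L)) with ((d, 0) :: z0 L).
    rewrite (HI ((d, 0) :: z0 L ++ (c, lam) :: nil) ((c, lam) :: (d, 0) :: z0 L)).
    2:{ discriminate. }
    2:{ apply Permutation_sym, (Permutation_cons_append ((d, 0) :: z0 L)). }
    rewrite (merge V HF).
    2:{ intros p Hp. unfold z0 in Hp. apply in_map_iff in Hp. destruct Hp as [a [<- _]]. reflexivity. }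
    rewrite (HI ((c, lam) :: (RtoC (sqrt (Cmod d ^ 2 + sq2 (z0 L))), 0) :: nil)
                ((RtoC (sqrt (Cmod d ^ 2 + sq2 (z0 L))), 0) :: (c, lam) :: nil)).
    2:{ discriminate. }
    2:{ apply perm_swap. }
    rewrite (phase V HF).
    pose proof (two_all V HC HD HA HI HF lam (Cmod c) (sqrt (Cmod d ^ 2 + sq2 (z0 L)))) as E.
    unfold g2 in E. rewrite sq2_z0 in *.
    assert (Hn : norm2sq (d :: L) = Cmod d ^ 2 + norm2sq L).
    { unfold norm2sq, sumR; cbn [map fold_right]. reflexivity. }
    rewrite Hn in Hpos.
    pose proof (norm2sq_nonneg L). pose proof (pow2_ge_0 (Cmod d)).
    rewrite pow2_sqrt in E by lra.
    rewrite E.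
    + rewrite Hn. field. lra.
    + apply Cmod_ge_0.
    + apply sqrt_pos.
    + lra.
Qed.

Lemma decomp (V : game -> R) : Constancy V -> Dominance V -> Additivity V ->
  Indifference V -> FineGraining2 V ->
  forall Q P, 0 < norm2sq (P ++ alphas Q) ->
  V (z0 P ++ Q) = weighted Q / norm2sq (P ++ alphas Q).
Proof.
  intros HC HD HA HI HF Q; induction Q as [|[c lam] Q IH]; intros P Hpos.
  - rewrite app_nil_r in *. rewrite (HC _ 0).
    + unfold weighted, sumR; cbn [map fold_right]. unfold Rdiv; ring.
    + destruct P; [unfold norm2sq, sumR in Hpos; simpl in Hpos; lra | discriminate].
    + intros p Hp. unfold z0 in Hp. apply in_map_iff in Hp. destruct Hp as [a [<- _]]. reflexivity.
  - assert (E : z0 P ++ (c, lam) :: Q =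
                gadd (z0 P ++ (c, lam) :: z0 (alphas Q)) (z0 (P ++ c :: nil) ++ Q)).
    { assert (Z : z0 (P ++ c :: nil) = z0 P ++ (c, 0) :: nil) by (unfold z0; now rewrite map_app).
      rewrite Z, <- app_assoc. rewrite gadd_app by reflexivity.
      rewrite gadd_z0_l by apply alphas_z0.
      cbn [app gadd]. rewrite Rplus_0_r, gadd_z0_l; reflexivity. }
    rewrite E, add_games; auto.
    + cbn [alphas map] in *. fold (alphas Q) in *.
      rewrite (single V HC HD HA HI HF) by auto.
      rewrite IH by (rewrite <- app_assoc; auto).
      rewrite <- app_assoc. cbn [app].
      unfold weighted, sumR; cbn [map fold_right fst snd]. fold sumR.
      unfold Rdiv; ring.
    + unfold alphas. rewrite !map_app. fold (alphas (z0 P)) (alphas (z0 (P ++ c :: nil))).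
      rewrite !alphas_z0. cbn [map fst]. fold (alphas (z0 (alphas Q))).
      rewrite alphas_z0. rewrite <- app_assoc. reflexivity.
    + destruct (z0 P); discriminate.
Qed.

Theorem theorem4 (V : game -> R) :
  Constancy V -> Dominance V -> Additivity V -> Continuity V ->
  Indifference V -> FineGraining2 V ->
  forall G : game, G <> nil ->
    (exists z, In z (alphas G) /\ z <> 0%C) ->
    V G = weighted G / norm2sq (alphas G).
Proof.
  intros HC HD HA _ HI HF G HG [z [Hz Hz0]].
  apply (decomp V HC HD HA HI HF G nil).
  simpl. apply Cmod_gt_0 in Hz0.
  assert (Cmod z ^ 2 <= norm2sq (alphas G)).
  { apply sumR_In.
    - apply Forall_forall. intros x Hx. apply in_map_iff in Hx. destruct Hx as [a [<- _]].
      apply pow2_ge_0.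
    - apply (in_map (fun z => Cmod z ^ 2)); auto. }
  nra.
Qed.
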